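(* Let $\mathcal{D}=\{d_1,\dots,d_n\}$ (data) and $\mathcal{H}=\{h_1,\dots,h_m\}$ (hypotheses) be finite sets. Let $M=(M_{ij})$ be a non-negative $n\times m$ matrix with no zero row and no zero column, let $\mathbf{r}=(r_1,\dots,r_n)$ be a probability vector with all $r_i>0$ (the teacher's prior $P_{T_0}(d_i)=r_i$ on $\mathcal{D}$), and let $\mathbf{c}=(c_1,\dots,c_m)$ be a probability vector with all $c_j>0$ (the learner's prior $P_{L_0}(h_j)=c_j$ on $\mathcal{H}$); these priors are arbitrary. Define the $n\times m$ matrix $\widetilde{L}_0$ by $(\widetilde{L}_0)_{ij}= r_i\, M_{ij}/\sum_{k=1}^m M_{ik}$. Suppose that $(\mathbf{r},\mathbf{c})$-Sinkhorn scaling of $\widetilde{L}_0$ converges, and let $P$ be its limit. Then the conditional communication plans $$T^\star(d_i\mid h_j)=\frac{P_{ij}}{c_j},\qquad L^\star(h_j\mid d_i)=\frac{P_{ij}}{r_i}$$ solve the cooperative inference system, i.e. for all $i,j$, $$L^\star(h_j\mid d_i)=\frac{T^\star(d_i\mid h_j)\,c_j}{\sum_{k=1}^m T^\star(d_i\mid h_k)\,c_k},\qquad T^\star(d_i\mid h_j)=\frac{L^\star(h_j\mid d_i)\,r_i}{\sum_{k=1}^n L^\star(h_j\mid d_k)\,r_k}.$$ In particular, cooperative inference is a special case of entropy-regularized optimal transport with $\lambda=1$: when all entries of $M$ are positive, $P$ is the minimizer over $U(\mathbf{r},\mathbf{c})$ of $\langle C,P'\rangle-\mathrm{h}(P')$,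 where $C_{ij}=-\log\big(M_{ij}/\sum_{k}M_{ik}\big)-\log r_i$.
   Context: $(\mathbf{r},\mathbf{c})$-Sinkhorn scaling of a non-negative matrix $A$ is the iterated alternation of rescaling each row $i$ of $A$ so that its sum equals $r_i$ and rescaling each column $j$ so that its sum equals $c_j$. $U(\mathbf{r},\mathbf{c})$ denotes the set of non-negative $n\times m$ matrices with row sums $\mathbf{r}$ and column sums $\mathbf{c}$. For $P'\in U(\mathbf{r},\mathbf{c})$, $\langle C,P'\rangle=\sum_{i,j}C_{ij}P'_{ij}$ and $\mathrm{h}(P')=-\sum_{i,j}P'_{ij}\log P'_{ij}$ is the Shannon entropy. Entropy-regularized optimal transport with parameter $\lambda>0$ and cost $C$ seeks the minimizer over $U(\mathbf{r},\mathbf{c})$ of $\langle C,P'\rangle-\frac{1}{\lambda}\mathrm{h}(P')$. *)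

(* Defs.v *)
From HB Require Import structures.
From mathcomp Require Import all_boot all_order all_algebra.
From mathcomp Require Import all_classical all_reals all_analysis.
Set Implicit Arguments. Unset Strict Implicit. Unset Printing Implicit Defensive.
Import Order.TTheory GRing.Theory Num.Theory.
Import numFieldNormedType.Exports.
Local Open Scope ring_scope.
Local Open Scope classical_set_scope.

Section Defs.
Variable R : realType.
Variables n m : nat.

Definition row_scale (r : 'I_n -> R) (A : 'M[R]_(n, m)) : 'M[R]_(n, m) :=
  \matrix_(i, j) (A i j * r i / \sum_(k < m) A i k).

Definition col_scale (c : 'I_m -> R) (A : 'M[R]_(n, m)) : 'M[R]_(n, m) :=
  \matrix_(i, j) (A i j * c j / \sum_(k < n) A k j).

(* The (r,c)-Sinkhorn iterates: A_0 = A, A_{2k+1} = row_scale A_{2k},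
   A_{2k+2} = col_scale A_{2k+1}. *)
Fixpoint sinkhorn_seq (r : 'I_n -> R) (c : 'I_m -> R) (A : 'M[R]_(n, m))
  (k : nat) : 'M[R]_(n, m) :=
  match k with
  | 0 => A
  | k'.+1 => if odd k then row_scale r (sinkhorn_seq r c A k')
             else col_scale c (sinkhorn_seq r c A k')
  end.

Definition sinkhorn_converges_to (r : 'I_n -> R) (c : 'I_m -> R)
  (A P : 'M[R]_(n, m)) : Prop :=
  forall i j, (fun k => sinkhorn_seq r c A k i j) @ \oo --> P i j.

Definition is_prob_vec {k : nat} (v : 'I_k -> R) : Prop :=
  (forall i, 0 <= v i) /\ \sum_(i < k) v i = 1.

Definition transport_polytope (r : 'I_n -> R) (c : 'I_m -> R)
  (P : 'M[R]_(n, m)) : Prop :=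
  (forall i j, 0 <= P i j) /\
  (forall i, \sum_(j < m) P i j = r i) /\
  (forall j, \sum_(i < n) P i j = c j).

Definition frob (C P : 'M[R]_(n, m)) : R := \sum_(i < n) \sum_(j < m) C i j * P i j.

(* Shannon entropy h(P) = - sum P_ij log P_ij  (ln 0 = 0, so 0 log 0 = 0) *)
Definition shannon_entropy (P : 'M[R]_(n, m)) : R :=
  - \sum_(i < n) \sum_(j < m) P i j * ln (P i j).

Definition L0tilde (r : 'I_n -> R) (M : 'M[R]_(n, m)) : 'M[R]_(n, m) :=
  \matrix_(i, j) (r i * M i j / \sum_(k < m) M i k).

Definition coop_cost (r : 'I_n -> R) (M : 'M[R]_(n, m)) : 'M[R]_(n, m) :=
  \matrix_(i, j) (- ln (M i j / \sum_(k < m) M i k) - ln (r i)).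

End Defs.

(* Main.v *)
Set Warnings "-all".
Require Import Defs.
From HB Require Import structures.
From mathcomp Require Import all_boot all_order all_algebra.
From mathcomp Require Import all_classical all_reals all_analysis.
From mathcomp Require Import ring lra.
Import Order.TTheory GRing.Theory Num.Theory.
Import numFieldNormedType.Exports.
Local Open Scope ring_scope.
Local Open Scope classical_set_scope.
Section KL.
Variable R : realType.

Lemma lnM' (x y : R) : 0 < x -> 0 < y -> ln (x * y) = ln x + ln y.
Proof. by move=> hx hy; apply: lnM; rewrite posrE. Qed.

Lemma ln_div' (x y : R) : 0 < x -> 0 < y -> ln (x / y) = ln x - ln y.
Proof. by move=> hx hy; apply: ln_div; rewrite posrE. Qed.

Lemma kl_pt (q p : R) : 0 <= q -> 0 < p ->
  0 <= q * ln q - q * ln p - (q - p) /\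
  (q * ln q - q * ln p - (q - p) = 0 -> q = p).
Proof.
move=> hq hp; have [q0|qpos] := eqVneq q 0.
  rewrite q0 !mul0r; split; first lra.
  move=> h; lra.
have hq' : 0 < q by rewrite lt_def qpos hq.
have e : expR (ln p - ln q) = p / q.
  by rewrite expRD expRN !lnK ?posrE.
have h1 := expR_ge1Dx (ln p - ln q).
split.
  have : q * (1 + (ln p - ln q)) <= q * (p / q) by rewrite ler_pM2l // -e.
  rewrite mulrCA mulfV ?lt0r_neq0 // mulr1 mulrDr mulr1 mulrBr; lra.
move=> h0; apply/eqP; apply/negPn/negP => hne.
have hne' : ln p - ln q != 0.
  rewrite subr_eq0; apply/negP => /eqP hl.
  by move/negP: hne; apply; apply/eqP; apply: ln_inj; rewrite ?posrE.
have := expR_gt1Dx hne'; rewrite e => h2.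
have : q * (1 + (ln p - ln q)) < q * (p / q) by rewrite ltr_pM2l.
rewrite mulrCA mulfV ?lt0r_neq0 // mulr1 mulrDr mulr1 mulrBr; lra.
Qed.

End KL.
Section Aux.
Variable R : realType.
Variables n m : nat.

Lemma sum_pos_of (I : finType) (f : I -> R) (j0 : I) :
  (forall j, 0 <= f j) -> 0 < f j0 -> 0 < \sum_j f j.
Proof.
move=> H0 H1; rewrite (bigD1 j0) //=.
have : 0 <= \sum_(j | j != j0) f j by apply: sumr_ge0 => j _; exact: H0.
lra.
Qed.

Variables (M : 'M[R]_(n, m)) (r : 'I_n -> R) (c : 'I_m -> R).
Hypothesis M0 : forall i j, 0 <= M i j.
Hypothesis Mrow : forall i, exists j, M i j != 0.
Hypothesis Mcol : forall j, exists i, M i j != 0.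
Hypothesis r0 : forall i, 0 < r i.
Hypothesis c0 : forall j, 0 < c j.

Lemma Mpos i j : M i j != 0 -> 0 < M i j.
Proof. by move=> h; rewrite lt_def h M0. Qed.

Lemma Srow_pos (x : 'I_n -> R) (y : 'I_m -> R) :
  (forall i, 0 < x i) -> (forall j, 0 < y j) ->
  forall i, 0 < \sum_(k < m) x i * y k * M i k.
Proof.
move=> hx hy i; have [j hj] := Mrow i.
apply: (@sum_pos_of _ _ j) => [k|].
  by rewrite mulr_ge0 // mulr_ge0 // ltW.
by rewrite mulr_gt0 ?mulr_gt0 // Mpos.
Qed.

Lemma Scol_pos (x : 'I_n -> R) (y : 'I_m -> R) :
  (forall i, 0 < x i) -> (forall j, 0 < y j) ->
  forall j, 0 < \sum_(k < n) x k * y j * M k j.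
Proof.
move=> hx hy j; have [i hi] := Mcol j.
apply: (@sum_pos_of _ _ i) => [k|].
  by rewrite mulr_ge0 // mulr_ge0 // ltW.
by rewrite mulr_gt0 ?mulr_gt0 // Mpos.
Qed.

Notation A k := (sinkhorn_seq r c (L0tilde r M) k).

Lemma inv k : exists x : 'I_n -> R, exists y : 'I_m -> R,
  [/\ (forall i, 0 < x i), (forall j, 0 < y j) &
      forall i j, A k i j = x i * y j * M i j].
Proof.
elim: k => [|k [x [y [hx hy hA]]]].
  have hS : forall i, 0 < \sum_(k < m) M i k.
    move=> i; have := @Srow_pos (fun _ => 1) (fun _ => 1) (fun _ => ltr01) (fun _ => ltr01) i.
    by under eq_bigr do rewrite !mul1r.
  exists (fun i => r i / \sum_(k < m) M i k), (fun _ => 1); split => //.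
  - by move=> i; rewrite divr_gt0.
  - move=> i j /=; rewrite /L0tilde mxE mulr1 mulrAC //.
have hSr := Srow_pos x y hx hy; have hSc := Scol_pos x y hx hy.
rewrite /=; case: ifP => _.
  exists (fun i => x i * r i / \sum_(k < m) x i * y k * M i k), y; split => //.
  - by move=> i; rewrite divr_gt0 // mulr_gt0.
  - move=> i j; rewrite /row_scale mxE.
    under eq_bigr do rewrite hA.
    rewrite hA; field; exact/lt0r_neq0/hSr.
exists x, (fun j => y j * c j / \sum_(k < n) x k * y j * M k j); split => //.
- by move=> j; rewrite divr_gt0 // mulr_gt0.
- move=> i j; rewrite /col_scale mxE.
  under eq_bigr do rewrite hA.
  rewrite hA; field; exact/lt0r_neq0/hSc.
Qed.

Lemma A_ge0 k i j : 0 <= A k i j.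
Proof.
have [x [y [hx hy hA]]] := inv k.
by rewrite hA mulr_ge0 // mulr_ge0 // ltW.
Qed.

Lemma rowsum_odd p i : \sum_(j < m) A (p.*2.+1) i j = r i.
Proof.
have [x [y [hx hy hA]]] := inv (p.*2).
rewrite /= odd_double /= /row_scale.
under eq_bigr do rewrite mxE.
rewrite -!mulr_suml mulrAC mulfV ?mul1r //.
apply/lt0r_neq0; have := Srow_pos x y hx hy i.
by under eq_bigr do rewrite -hA.
Qed.

Lemma colsum_even p j : \sum_(i < n) A (p.*2.+2) i j = c j.
Proof.
have [x [y [hx hy hA]]] := inv (p.*2.+1).
have hS : \sum_(k < n) A (p.*2.+1) k j != 0.
  apply/lt0r_neq0; have := Scol_pos x y hx hy j.
  by under eq_bigr do rewrite -hA.
move: hS; set B := A (p.*2.+1) => hS.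
rewrite (_ : A (p.*2.+2) = col_scale c B); last first.
  transitivity (if odd (p.*2.+2) then row_scale r B else col_scale c B) => //.
  by rewrite !oddS odd_double.
rewrite /col_scale.
under eq_bigr do rewrite mxE.
by rewrite -!mulr_suml mulrAC mulfV ?mul1r.
Qed.

Variable P : 'M[R]_(n, m).
Hypothesis hP : sinkhorn_converges_to r c (L0tilde r M) P.

Lemma P_ge0 i j : 0 <= P i j.
Proof.
apply: (closed_cvg _ (@closed_ge R 0) _ _ (hP i j)).
by apply: nearW => k; exact: A_ge0.
Qed.

Lemma subseq_odd (u : nat -> R) (l : R) : u @ \oo --> l -> (fun p => u (p.*2.+1)) @ \oo --> l.
Proof.
move=> hu.
have hf : (fun p => p.*2.+1) @ \oo --> \oo.
  have := cvg_comp _ _ (cvg_mulnl 2 isT) (cvg_addnr 1).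
  have e : (addn^~1 \o muln 2) =1 (fun p => p.*2.+1) by move=> p /=; rewrite addn1 mul2n.
  by rewrite (eq_cvg _ _ e).
exact: (cvg_comp _ _ hf hu).
Qed.

Lemma subseq_even (u : nat -> R) (l : R) : u @ \oo --> l -> (fun p => u (p.*2.+2)) @ \oo --> l.
Proof.
move=> hu.
have hf : (fun p => p.*2.+2) @ \oo --> \oo.
  have := cvg_comp _ _ (cvg_mulnl 2 isT) (cvg_addnr 2).
  have e : (addn^~2 \o muln 2) =1 (fun p => p.*2.+2) by move=> p /=; rewrite addn2 mul2n.
  by rewrite (eq_cvg _ _ e).
exact: (cvg_comp _ _ hf hu).
Qed.

Lemma rowsum_P i : \sum_(j < m) P i j = r i.
Proof.
have h1 : (fun k => \sum_(j < m) A k i j) @ \oo --> \sum_(j < m) P i j.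
  apply: cvg_big => //; exact: add_continuous.
have := subseq_odd _ _ h1.
rewrite (@eq_cvg _ _ _ _ (fun _ => r i)); last by move=> p; rewrite rowsum_odd.
move=> h2; exact: (cvg_unique (@Rhausdorff R) h2 (cvg_cst _)).
Qed.

Lemma colsum_P j : \sum_(i < n) P i j = c j.
Proof.
have h1 : (fun k => \sum_(i < n) A k i j) @ \oo --> \sum_(i < n) P i j.
  apply: cvg_big => //; exact: add_continuous.
have := subseq_even _ _ h1.
rewrite (@eq_cvg _ _ _ _ (fun _ => c j)); last by move=> p; rewrite colsum_even.
move=> h2; exact: (cvg_unique (@Rhausdorff R) h2 (cvg_cst _)).
Qed.

Lemma cross_P i i' j j' :
  P i j * P i' j' * M i j' * M i' j = P i j' * P i' j * M i j * M i' j'.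
Proof.
have hL := cvgM (cvgM (cvgM (hP i j) (hP i' j')) (cvg_cst (M i j'))) (cvg_cst (M i' j)).
have hR := cvgM (cvgM (cvgM (hP i j') (hP i' j)) (cvg_cst (M i j))) (cvg_cst (M i' j')).
have e : (fun k => A k i j' * A k i' j * M i j * M i' j') =1
         (fun k => A k i j * A k i' j' * M i j' * M i' j).
  move=> k /=; have [x [y [hx hy hA]]] := inv k.
  rewrite !hA; ring.
have hR2 : (fun k => A k i j * A k i' j' * M i j' * M i' j) @ \oo -->
           P i j' * P i' j * M i j * M i' j'.
  by rewrite -(eq_cvg _ _ e); apply: hR.
have hL2 : (fun k => A k i j * A k i' j' * M i j' * M i' j) @ \oo -->
           P i j * P i' j' * M i j' * M i' j by apply: hL.
exact: (cvg_unique (@Rhausdorff R) hL2 hR2).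
Qed.


Hypothesis hr : is_prob_vec r.
Hypothesis hc : is_prob_vec c.

Lemma exists_pos (I : finType) (f : I -> R) :
  (forall j, 0 <= f j) -> 0 < \sum_j f j -> exists j, 0 < f j.
Proof.
move=> h0 hs; case: (pselect (exists j, 0 < f j)) => // H; exfalso.
have : \sum_j f j = 0.
  apply: big1 => j _; apply/eqP; rewrite eq_le h0 andbT leNgt.
  by apply/negP => hj; apply: H; exists j.
lra.
Qed.

Lemma part1 i j :
      P i j / r i =
        (P i j / c j * c j) / (\sum_(k < m) P i k / c k * c k)
   /\ P i j / c j =
        (P i j / r i * r i) / (\sum_(k < n) P k j / r k * r k).
Proof.
split.
  rewrite divfK ?lt0r_neq0 //.
  under eq_bigr do rewrite divfK ?lt0r_neq0 //.
  by rewrite rowsum_P.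
rewrite divfK ?lt0r_neq0 //.
under eq_bigr do rewrite divfK ?lt0r_neq0 //.
by rewrite colsum_P.
Qed.

Hypothesis Mp : forall i j, 0 < M i j.

Lemma P_pos i j : 0 < P i j.
Proof.
have [l hl] : exists l, 0 < P i l.
  by apply: exists_pos; [exact: P_ge0 | rewrite rowsum_P].
have [k hk] : exists k, 0 < P k j.
  by apply: exists_pos => [x|]; [exact: P_ge0 | rewrite colsum_P].
have := cross_P i k j l.
have : 0 < P i l * P k j * M i j * M k l by rewrite !mulr_gt0.
move=> hpos e; rewrite lt_def (P_ge0 i j) andbT; apply/eqP => h0.
by move: hpos; rewrite -e h0 !mul0r ltxx.
Qed.

Definition obj (Q : 'M[R]_(n, m)) :=
  frob (coop_cost r M) Q - shannon_entropy Q.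

Lemma opt_main : exists K, forall Q, transport_polytope r c Q ->
  obj Q = K + \sum_(i < n) \sum_(j < m) (Q i j * ln (Q i j) - Q i j * ln (P i j)).
Proof.
have [i0 _] : exists i0 : 'I_n, True.
  case: (pselect (exists i0 : 'I_n, True)) => // H; exfalso.
  case: hr => _; rewrite big1 => [|i _]; last by exfalso; apply: H; exists i.
  move=> /eqP; rewrite eq_sym oner_eq0 //.
have [j0 _] : exists j0 : 'I_m, True.
  case: (pselect (exists j0 : 'I_m, True)) => // H; exfalso.
  case: hc => _; rewrite big1 => [|i _]; last by exfalso; apply: H; exists i.
  move=> /eqP; rewrite eq_sym oner_eq0 //.
pose S i := \sum_(k < m) M i k.
have hS i : 0 < S i.
  by apply: (@sum_pos_of _ _ j0) => [k|]; [exact: ltW | exact: Mp].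
pose al i := ln (P i j0) - ln (M i j0) + ln (S i) - ln (r i).
pose be j := ln (P i0 j) - ln (M i0 j) + ln (M i0 j0) - ln (P i0 j0).
have hC i j : coop_cost r M i j = al i + be j - ln (P i j).
  rewrite /coop_cost mxE (@ln_div' R _ _ (Mp i j) (hS i)).
  have e := cross_P i i0 j j0.
  have := congr1 (@ln R) e.
  rewrite !lnM' ?mulr_gt0 ?P_pos //.
  rewrite /al /be /S; lra.
exists (\sum_(i < n) al i * r i + \sum_(j < m) be j * c j).
move=> Q [Q0 [Qr Qc]].
rewrite /obj /frob /shannon_entropy opprK -big_split /=.
transitivity (\sum_(i < n) \sum_(j < m) ((al i * Q i j + be j * Q i j) +
    (Q i j * ln (Q i j) - Q i j * ln (P i j)))).
  apply: eq_bigr => i _; rewrite -big_split; apply: eq_bigr => j _ /=.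
  rewrite hC; ring.
rewrite (eq_bigr (fun i => \sum_(j < m) (al i * Q i j + be j * Q i j) +
   \sum_(j < m) (Q i j * ln (Q i j) - Q i j * ln (P i j)))); last first.
  by move=> i _; rewrite big_split.
rewrite big_split /=; congr (_ + _).
rewrite (eq_bigr (fun i => \sum_(j < m) al i * Q i j + \sum_(j < m) be j * Q i j)); last first.
  by move=> i _; rewrite big_split.
rewrite big_split /=; congr (_ + _).
  by apply: eq_bigr => i _; rewrite -mulr_sumr Qr.
rewrite exchange_big /=.
by apply: eq_bigr => j _; rewrite -mulr_sumr Qc.
Qed.

Lemma P_tp : transport_polytope r c P.
Proof. by split; [exact: P_ge0 | split; [exact: rowsum_P | exact: colsum_P]]. Qed.

Lemma diff_eq Q : transport_polytope r c Q ->
  obj Q - obj P = \sum_(i < n) \sum_(j < m)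
     (Q i j * ln (Q i j) - Q i j * ln (P i j) - (Q i j - P i j)).
Proof.
move=> hQ; have [K hK] := opt_main.
rewrite (hK _ hQ) (hK _ P_tp).
have -> : \sum_(i < n) \sum_(j < m) (P i j * ln (P i j) - P i j * ln (P i j)) = 0.
  by rewrite big1 // => i _; rewrite big1 // => j _; rewrite subrr.
have hd : \sum_(i < n) \sum_(j < m) (Q i j - P i j) = 0.
  rewrite big1 // => i _; rewrite sumrB.
  by case: hQ => _ [-> _]; rewrite rowsum_P subrr.
rewrite addr0 addrAC subrr add0r.
rewrite -[X in _ = X]addr0 -[X in _ = _ + X]hd -big_split /=.
apply: eq_bigr => i _; rewrite -big_split /=.
by apply: eq_bigr => j _; ring.
Qed.

Lemma part2 :
     transport_polytope r c P /\
     (forall P', transport_polytope r c P' ->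
        frob (coop_cost r M) P - shannon_entropy P
          <= frob (coop_cost r M) P' - shannon_entropy P') /\
     (forall P', transport_polytope r c P' ->
        frob (coop_cost r M) P' - shannon_entropy P'
          <= frob (coop_cost r M) P - shannon_entropy P -> P' = P).
Proof.
split; first exact: P_tp.
have hd Q : transport_polytope r c Q -> forall i j,
    0 <= Q i j * ln (Q i j) - Q i j * ln (P i j) - (Q i j - P i j).
  by case=> Q0 _ i j; case: (@kl_pt R _ _ (Q0 i j) (P_pos i j)).
split.
  move=> Q hQ; rewrite -subr_ge0; have := diff_eq _ hQ; rewrite /obj => ->.
  by apply: sumr_ge0 => i _; apply: sumr_ge0 => j _; exact: hd.
move=> Q hQ hle.
have h0 : obj Q - obj P = 0.
  apply/eqP; rewrite eq_le; apply/andP; split; first by rewrite /obj subr_le0.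
  rewrite diff_eq //.
  by apply: sumr_ge0 => i _; apply: sumr_ge0 => j _; exact: hd.
move: h0; rewrite diff_eq // => /eqP; rewrite psumr_eq0 => [/allP H|i _]; last first.
  by apply: sumr_ge0 => j _; exact: hd.
apply/matrixP => i j.
have := H i (mem_index_enum i); rewrite psumr_eq0 => [/allP H2|k _]; last exact: hd.
have := H2 j (mem_index_enum j) => /eqP.
by case: hQ => Q0 _; case: (@kl_pt R _ _ (Q0 i j) (P_pos i j)) => _ hh /hh.
Qed.
End Aux.

Theorem proposition3 (R : realType) (n m : nat) (M : 'M[R]_(n, m))
  (r : 'I_n -> R) (c : 'I_m -> R) (P : 'M[R]_(n, m)) :
  (forall i j, 0 <= M i j) ->
  (forall i, exists j, M i j != 0) ->
  (forall j, exists i, M i j != 0) ->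
  is_prob_vec r -> (forall i, 0 < r i) ->
  is_prob_vec c -> (forall j, 0 < c j) ->
  sinkhorn_converges_to r c (L0tilde r M) P ->
  (forall i j,
      P i j / r i =
        (P i j / c j * c j) / (\sum_(k < m) P i k / c k * c k)
   /\ P i j / c j =
        (P i j / r i * r i) / (\sum_(k < n) P k j / r k * r k))
  /\
  ((forall i j, 0 < M i j) ->
     transport_polytope r c P /\
     (forall P', transport_polytope r c P' ->
        frob (coop_cost r M) P - shannon_entropy P
          <= frob (coop_cost r M) P' - shannon_entropy P') /\
     (forall P', transport_polytope r c P' ->
        frob (coop_cost r M) P' - shannon_entropy P'
          <= frob (coop_cost r M) P - shannon_entropy P -> P' = P)).
Proof.
move=> M0 Mrow Mcol hr r0 hc c0 hP; split.
  move=> i j; eapply part1; eassumption.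
move=> Mp; eapply part2; eassumption.
Qed.
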